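(* Let $M$ be a proper metric space and $X_1,\dots,X_n\subseteq M$ Borel subsets. Then the sets $A_0=X_1\cap\dots\cap X_n$ and $A_i=X_i^c\cap X_{i+1}\cap\dots\cap X_n$ ($i=1,\dots,n$) form a partition of $M$. Moreover, if $X_1,\dots,X_n$ is a coarsely transverse collection of half spaces, then $A_0,\dots,A_n$ is a coarsely transverse $n$-partition.
   Context: For $Y\subseteq M$, $Y_R=\{x:d(x,Y)\le R\}$. Coarsely transverse half spaces: Borel sets $X_1,\dots,X_n$ with $\bigcap_i (X_i)_R\cap (X_i^c)_R$ bounded for every $R\ge0$. A coarsely transverse $n$-partition: pairwise disjoint Borel sets $A_0,\dots,A_n$ with union $M$ such that $(A_0)_R\cap\dots\cap(A_n)_R$ is bounded for every $R\ge 0$. *)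

(* Defs.v *)
From HB Require Import structures.
From mathcomp Require Import all_boot all_order all_algebra.
From mathcomp Require Import all_classical all_reals all_analysis.
Set Implicit Arguments. Unset Strict Implicit. Unset Printing Implicit Defensive.
Import Order.TTheory GRing.Theory Num.Theory.
Local Open Scope classical_set_scope.
Local Open Scope ring_scope.

Section defs.
Context {R : realType} {M : metricType R}.

(* d(x,Y) = inf_{y in Y} d(x,y), as an extended real (+oo when Y is empty). *)
Definition set_dist (x : M) (Y : set M) : \bar R :=
  ereal_inf [set (mdist x y)%:E | y in Y].

Definition nbhdR (Y : set M) (r : R) : set M :=
  [set x | (set_dist x Y <= r%:E)%E].

Definition mbounded (A : set M) : Prop :=
  exists r : R, forall x y, A x -> A y -> mdist x y <= r.

Definition proper_metric : Prop :=
  forall (x : M) (r : R), compact [set y | mdist x y <= r].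

Definition Borel (A : set M) : Prop := <<s [set U : set M | open U] >> A.

Definition coarsely_transverse_half_spaces (n : nat) (X : nat -> set M) : Prop :=
  (forall i, (1 <= i <= n)%N -> Borel (X i)) /\
  forall r : R, 0 <= r ->
    mbounded (\bigcap_(i in [set i | (1 <= i <= n)%N])
                 (nbhdR (X i) r `&` nbhdR (~` X i) r)).

Definition coarsely_transverse_partition (n : nat) (A : nat -> set M) : Prop :=
  (forall i, (i <= n)%N -> Borel (A i)) /\
  (forall i j, (i <= n)%N -> (j <= n)%N -> i <> j -> A i `&` A j = set0) /\
  (\bigcup_(i in [set i | (i <= n)%N]) A i = setT) /\
  forall r : R, 0 <= r ->
    mbounded (\bigcap_(i in [set i | (i <= n)%N]) nbhdR (A i) r).

Definition half_space_partition (n : nat) (X : nat -> set M) (i : nat) : set M :=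
  if i == 0%N then \bigcap_(j in [set j | (1 <= j <= n)%N]) X j
  else ~` X i `&` \bigcap_(j in [set j | (i < j <= n)%N]) X j.

End defs.

(* Main.v *)
Require Import Defs.
From HB Require Import structures.
From mathcomp Require Import all_boot all_order all_algebra.
From mathcomp Require Import all_classical all_reals all_analysis.
Import Order.TTheory GRing.Theory Num.Theory.
Local Open Scope classical_set_scope.
Local Open Scope ring_scope.

Section S.
Context {R : realType} {M : metricType R}.

Lemma BorelC (A : set M) : Borel A -> Borel (~` A).
Proof. by move=> hA; rewrite -setTD; exact: sigma_algebraCD. Qed.

Lemma Borel_bigcap (F : nat -> set M) (P : set nat) :
  (forall k, P k -> Borel (F k)) -> Borel (\bigcap_(i in P) F i).
Proof.
move=> h.
pose G i : set M := if pselect (P i) then ~` F i else set0.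
have -> : \bigcap_(i in P) F i = ~` \bigcup_i G i.
  apply/seteqP; split => x.
    move=> hx [i _]; rewrite /G; case: (pselect (P i)) => Pi /=.
      by apply; exact: hx.
    by [].
  move=> hx i Pi; apply: contrapT => nF; apply: hx; exists i => //.
  by rewrite /G; case: (pselect (P i)).
apply: BorelC; apply: sigma_algebra_bigcup => i; rewrite /G.
destruct (pselect (P i)) as [Pi|Pi] => /=; first by apply: BorelC; apply: h.
exact: sigma_algebra0.
Qed.

Lemma BorelI (A B : set M) : Borel A -> Borel B -> Borel (A `&` B).
Proof.
move=> hA hB.
have -> : A `&` B = \bigcap_(i in [set: nat]) (if i == 0%N then A else B).
  apply/seteqP; split => x.
    by move=> [xA xB] i _; case: ifP.
  by move=> h; split; [exact: (h 0%N) | exact: (h 1%N)].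
by apply: Borel_bigcap => k _; case: ifP.
Qed.

Lemma nbhdR_sub (A B : set M) r : A `<=` B -> nbhdR A r `<=` nbhdR B r.
Proof.
move=> AB x; rewrite /nbhdR /= => h; apply: le_trans h.
by apply: ereal_inf_le_tmp; exact: image_subset.
Qed.

Lemma mbounded_sub (A B : set M) : A `<=` B -> mbounded B -> mbounded A.
Proof. by move=> AB [r hr]; exists r => x y /AB xB /AB yB; exact: hr. Qed.

End S.

Theorem lemma5p5 (R : realType) (M : metricType R) (n : nat) (X : nat -> set M) :
  proper_metric (M := M) ->
  (forall i, (1 <= i <= n)%N -> Borel (X i)) ->
  ((forall i, (i <= n)%N -> Borel (half_space_partition n X i)) /\
   (forall i j, (i <= n)%N -> (j <= n)%N -> i <> j ->
      half_space_partition n X i `&` half_space_partition n X j = set0) /\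
   (\bigcup_(i in [set i | (i <= n)%N]) half_space_partition n X i = setT)) /\
  (coarsely_transverse_half_spaces n X ->
   coarsely_transverse_partition n (half_space_partition n X)).
Proof.
move=> _ hX.
have HB : forall i, (i <= n)%N -> Borel (half_space_partition n X i).
  move=> i hi; rewrite /half_space_partition; case: eqP => [_|/eqP i0].
    by apply: Borel_bigcap => k /= hk; exact: hX.
  apply: BorelI; first by apply: BorelC; apply: hX; rewrite lt0n i0.
  by apply: Borel_bigcap => k /= hk; apply: hX; case/andP: hk => h1 ->; rewrite andbT; apply: leq_ltn_trans h1.
have disj : forall i j, (i < j <= n)%N ->
    half_space_partition n X i `&` half_space_partition n X j = set0.
  move=> i j /andP[ij jn]; apply/seteqP; split => x // [].
  rewrite /half_space_partition.
  have j0 : (j == 0%N) = false by apply/negbTE; rewrite -lt0n; apply: leq_ltn_trans ij.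
  rewrite j0 => + [nXj _]; case: eqP => [_|_].
    by move=> h; apply: nXj; apply: h; rewrite /= jn andbT; apply: leq_ltn_trans ij.
  by move=> [_ h]; apply: nXj; apply: h; rewrite /= ij jn.
have HD : forall i j, (i <= n)%N -> (j <= n)%N -> i <> j ->
    half_space_partition n X i `&` half_space_partition n X j = set0.
  move=> i j hi hj ij; case: (ltngtP i j) => h.
  - by apply: disj; rewrite h hj.
  - by rewrite setIC; apply: disj; rewrite h hi.
  - by move: ij; rewrite h.
have HU : \bigcup_(i in [set i | (i <= n)%N]) half_space_partition n X i = setT.
  apply/seteqP; split => // x _.
  suff : forall k, (k <= n)%N -> (forall j, (k < j <= n)%N -> X j x) ->
      exists2 i, (i <= n)%N & half_space_partition n X i x.
    by move=> /(_ n (leqnn n)) [] // => [j /andP[a b]|i hi hx]; [ rewrite ltnNge b in a | exists i].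
  elim=> [|k IH] kn hk.
    by exists 0%N => //; rewrite /half_space_partition eqxx => j /= hj; apply: hk.
  have [Xk|nXk] := pselect (X k.+1 x).
    apply: IH; first exact: ltnW.
    move=> j /andP[kj jn]; have [->|] := eqVneq j k.+1; first exact: Xk.
    by move=> jk; apply: hk; rewrite jn andbT ltn_neqAle eq_sym jk kj.
  exists k.+1 => //; rewrite /half_space_partition /=; split => //.
split; first by split => //; split.
rewrite /coarsely_transverse_half_spaces /coarsely_transverse_partition => -[_ hb]; split => //; split => //; split => //.
move=> r r0; apply: mbounded_sub (hb r r0) => x hx i /= /andP[i1 iN]; split.
- apply: (@nbhdR_sub R M (half_space_partition n X 0%N)); last exact: hx.
  by rewrite /half_space_partition eqxx => y hy; apply: hy; rewrite /= i1 iN.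
- apply: (@nbhdR_sub R M (half_space_partition n X i)); last exact: hx.
  have i0 : (i == 0%N) = false by apply/negbTE; rewrite -lt0n.
  by rewrite /half_space_partition i0 => y [].
Qed.
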